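(* Let $\Omega\subset\mathbb{C}^n$ be a bounded connected domain and let $B(\Omega)$ be a Banach space of holomorphic functions on $\Omega$ containing all polynomials on $\Omega$, such that for every $z\in\Omega$ the evaluation functional $K_z(f)=f(z)$ is bounded on $B(\Omega)$, and such that the polynomials are dense in $B(\Omega)$. Let $\{z_k\}\subset\Omega$ and $\zeta\in\partial\Omega$ with $z_k\to\zeta$ and $\|K_{z_k}\|\to\infty$. Then $$k_{z_k}=\frac{K_{z_k}}{\|K_{z_k}\|}\to 0\quad\text{weak}^*\text{ in }(B(\Omega))^*\text{ as }k\to\infty.$$
   Context: A Banach space of holomorphic functions on $\Omega$ is a vector space of holomorphic functions on $\Omega$ (pointwise operations) with a complete norm. $\|K_z\|$ is the norm in the dual space $(B(\Omega))^*$. *)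

(* Defs.v *)
From HB Require Import structures.
From mathcomp Require Import all_boot all_order all_algebra.
From mathcomp Require Import complex.
From mathcomp Require Import all_classical all_reals all_analysis.
Import Order.TTheory GRing.Theory Num.Theory.
Import numFieldNormedType.Exports.

Set Implicit Arguments.
Unset Strict Implicit.
Unset Printing Implicit Defensive.

Local Open Scope ring_scope.
Local Open Scope classical_set_scope.

Definition Cx (R : realType) : numFieldType := R[i].

(* real-valued modulus of a complex number (|x| is real, stored in C) *)
Definition rnorm (R : realType) (x : Cx R) : R := complex.Re `|x|.

Definition vnorm (R : realType) (V : normedModType (Cx R)) (v : V) : R :=
  complex.Re `|v|.

Definition is_poly (R : realType) (n : nat) (p : 'rV[Cx R]_n -> Cx R) : Prop :=
  exists s : seq (Cx R * ('I_n -> nat)),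
    forall z, p z = \sum_(m <- s) m.1 * \prod_(i < n) (z ord0 i) ^+ (m.2 i).

(* [V] together with [ev] is a Banach space of holomorphic functions on Om: *)
(* each v : V is identified with the function ev v restricted to Om;        *)
(* and each ev v is holomorphic (C-Frechet differentiable) on Om.           *)
Definition hol_banach_space (R : realType) (n : nat)
    (Om : set 'rV[Cx R]_n) (V : completeNormedModType (Cx R))
    (ev : V -> 'rV[Cx R]_n -> Cx R) : Prop :=
  [/\ (forall (a : Cx R) (u v : V) z, Om z -> ev (a *: u + v) z = a * ev u z + ev v z),
      (forall u v : V, (forall z, Om z -> ev u z = ev v z) -> u = v) &
      (forall (v : V) z, Om z -> differentiable (ev v) z)].

Definition contains_polys (R : realType) (n : nat)
    (Om : set 'rV[Cx R]_n) (V : completeNormedModType (Cx R))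
    (ev : V -> 'rV[Cx R]_n -> Cx R) : Prop :=
  forall p, is_poly p -> exists v : V, forall z, Om z -> ev v z = p z.

Definition polys_dense (R : realType) (n : nat)
    (Om : set 'rV[Cx R]_n) (V : completeNormedModType (Cx R))
    (ev : V -> 'rV[Cx R]_n -> Cx R) : Prop :=
  closure [set v : V | exists p, is_poly p /\ forall z, Om z -> ev v z = p z]
  = setT.

Definition bounded_evals (R : realType) (n : nat)
    (Om : set 'rV[Cx R]_n) (V : completeNormedModType (Cx R))
    (ev : V -> 'rV[Cx R]_n -> Cx R) : Prop :=
  forall z, Om z -> exists M : R, forall v : V, rnorm (ev v z) <= M * vnorm v.

Definition Knorm (R : realType) (n : nat) (V : completeNormedModType (Cx R))
    (ev : V -> 'rV[Cx R]_n -> Cx R) (z : 'rV[Cx R]_n) : R :=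
  sup [set rnorm (ev v z) | v in [set v : V | vnorm v <= 1]].

Definition kz (R : realType) (n : nat) (V : completeNormedModType (Cx R))
    (ev : V -> 'rV[Cx R]_n -> Cx R) (z : 'rV[Cx R]_n) (v : V) : Cx R :=
  ev v z / ((Knorm ev z)%:C)%C.

Definition weak_star_cvg0 (R : realType) (V : completeNormedModType (Cx R))
    (phi : nat -> V -> Cx R) : Prop :=
  forall v : V, (fun k => phi k v) @ \oo --> (0 : Cx R).

(* Main.v *)
Require Import Defs.
From HB Require Import structures.
From mathcomp Require Import all_boot all_order all_algebra.
From mathcomp Require Import complex.
From mathcomp Require Import all_classical all_reals all_analysis.
Import Order.TTheory GRing.Theory Num.Theory.
Import numFieldNormedType.Exports.
Local Open Scope ring_scope.
Local Open Scope classical_set_scope.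
From mathcomp Require Import lra.

Section H.
Context {R : realType}.

Lemma rnormE (x : Cx R) : `|x| = ((rnorm x)%:C)%C.
Proof. by rewrite /rnorm RRe_real // normr_real. Qed.

Lemma vnormE (V : normedModType (Cx R)) (v : V) : `|v| = ((vnorm v)%:C)%C.
Proof. by rewrite /vnorm RRe_real // ger0_real. Qed.

Lemma rnorm_ge0 (x : Cx R) : 0 <= rnorm x.
Proof. by rewrite -(@ler0c R) -rnormE. Qed.

Lemma vnorm_ge0 (V : normedModType (Cx R)) (v : V) : 0 <= vnorm v.
Proof. by rewrite -(@ler0c R) -vnormE. Qed.

Lemma rnormM (x y : Cx R) : rnorm (x * y) = rnorm x * rnorm y.
Proof. by apply: (@complexI R); rewrite rmorphM -!rnormE normrM. Qed.

Lemma rnormD (x y : Cx R) : rnorm (x + y) <= rnorm x + rnorm y.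
Proof. by rewrite -(@lecR R) rmorphD -!rnormE ler_normD. Qed.

Lemma rnormV (x : Cx R) : rnorm (x^-1) = (rnorm x)^-1.
Proof.
apply: (@complexI R); rewrite -rnormE normfV rnormE.
by rewrite (fmorphV (real_complex R)).
Qed.

Lemma rnormC (a : R) : 0 <= a -> rnorm ((a%:C)%C : Cx R) = a.
Proof.
move=> a0; apply: (@complexI R); rewrite -rnormE ger0_norm //.
by rewrite ler0c.
Qed.

Lemma vnormZ (V : normedModType (Cx R)) (a : Cx R) (v : V) : vnorm (a *: v) = rnorm a * vnorm v.
Proof. apply: (@complexI R); rewrite rmorphM /= -rnormE -!vnormE normrZ; reflexivity. Qed.

Lemma entry_le n (x : 'rV[Cx R]_n) i : `|x ord0 i| <= `|x|.
Proof.
change (`|x ord0 i| <= mx_norm x); rewrite mx_normE -[leLHS]nngE num_le.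
exact: (le_bigmax _ _ (ord0, i)).
Qed.
End H.

Lemma Kbound (R : realType) (n : nat) (Om : set 'rV[Cx R]_n)
  (V : completeNormedModType (Cx R)) (ev : V -> 'rV[Cx R]_n -> Cx R) z :
  hol_banach_space Om ev -> bounded_evals Om ev -> Om z ->
  (ev 0 z = 0) /\ forall w, rnorm (ev w z) <= Knorm ev z * vnorm w.
Proof.
case=> lin _ _ Hb Hz.
have ev0 : ev 0 z = 0.
  by have := lin (-1) 0 0 z Hz; rewrite scaler0 addr0 mulN1r addNr.
split => // w.
have rn0 : rnorm (0 : Cx R) = 0 by rewrite /rnorm normr0.
have vn0 : vnorm (0 : V) = 0 by rewrite /vnorm normr0.
have [M HM] := Hb z Hz.
have hs : has_sup [set rnorm (ev v z) | v in [set v : V | vnorm v <= 1]].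
  split. exists (rnorm (ev 0 z)), 0 => //=. by rewrite /vnorm normr0 ler01.
  exists `|M| => _ [v /= Hv <-].
  apply: (le_trans (HM v)).
  apply: (le_trans (ler_wpM2r (vnorm_ge0 _ v) (real_ler_norm (num_real M)))).
  by rewrite -[leRHS]mulr1 ler_wpM2l.
have [w0|wpos] := eqVneq (vnorm w) 0.
  have -> : w = 0.
    by apply/normr0_eq0; rewrite vnormE w0.
  by rewrite ev0 vn0 rn0 mulr0.
have wgt : 0 < vnorm w by rewrite lt_def wpos vnorm_ge0.
set c := (vnorm w)^-1.
have c0 : 0 <= c by rewrite invr_ge0 vnorm_ge0.
have Hu : vnorm ((c%:C)%C *: w) <= 1.
  by rewrite vnormZ rnormC // mulVf.
have hE : [set rnorm (ev v z) | v in [set v : V | vnorm v <= 1]] (rnorm (ev ((c%:C)%C *: w) z)).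
  by exists ((c%:C)%C *: w).
have := sup_upper_bound hs hE.
have := lin (c%:C)%C w 0 z Hz; rewrite addr0 ev0 addr0 => ->.
rewrite rnormM rnormC // mulrC -ler_pdivlMr; last by rewrite invr_gt0.
rewrite /c invrK mulrC.
by [].
Qed.

Lemma poly_bound (R : realType) (n : nat) (z : nat -> 'rV[Cx R]_n) (zeta : 'rV[Cx R]_n) p :
  z @ \oo --> zeta -> is_poly p -> exists B : R, forall k, rnorm (p (z k)) <= B.
Proof.
move=> /cvgP hc [s Hp].
have := cvg_seq_bounded hc.
case=> M [Mreal HM].
have hlt : M < M + 1 by rewrite ltrDl ltr01.
have /= HM1 := HM (M + 1) hlt.
set Mc := M + 1 in HM1.
have Mc0 : 0 <= Mc by apply: le_trans (HM1 0 I); apply: normr_ge0.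
pose S := \sum_(m <- s) `|m.1| * \prod_(i < n) Mc ^+ (m.2 i).
have S0 : 0 <= S.
  by apply: sumr_ge0 => m _; apply: mulr_ge0 => //; apply: prodr_ge0 => i _; apply: exprn_ge0.
exists (rnorm S) => k.
rewrite -(@lecR R) -!rnormE (ger0_norm S0) Hp.
apply: le_trans (ler_norm_sum _ _ _) _.
apply: ler_sum => m _; rewrite normrM ler_wpM2l // normr_prod.
apply: ler_prod => i _; rewrite normr_ge0 /= normrX.
apply: lerXn2r; rewrite ?nnegrE ?normr_ge0 //.
exact: le_trans (@entry_le _ n (z k) i) (HM1 k I).
Qed.

Theorem proposition2p8 (R : realType) (n : nat) (Om : set 'rV[Cx R]_n)
  (V : completeNormedModType (Cx R)) (ev : V -> 'rV[Cx R]_n -> Cx R)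
  (z : nat -> 'rV[Cx R]_n) (zeta : 'rV[Cx R]_n) :
  open Om -> connected Om -> bounded_set Om ->
  hol_banach_space Om ev -> contains_polys Om ev -> bounded_evals Om ev ->
  polys_dense Om ev ->
  (forall k, Om (z k)) ->
  closure Om zeta -> ~ Om zeta ->
  z @ \oo --> zeta ->
  (fun k => Knorm ev (z k)) @ \oo --> +oo ->
  weak_star_cvg0 (fun k => kz ev (z k)).
Proof.
move=> _ _ _ Hhol _ Hbe Hden Hz _ _ Hzc HK v.
apply/cvgr0Pnorm_lt => eps eps0.
have epsR : eps = ((complex.Re eps)%:C)%C by rewrite RRe_real // gtr0_real.
set e := complex.Re eps in epsR.
clearbody e.
have e0 : 0 < e by rewrite -(@ltcR R) -epsR.
have e20 : 0 < e / 2 by rewrite divr_gt0.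
have : closure [set v : V | exists p, is_poly p /\ forall z, Om z -> ev v z = p z] v.
  by rewrite Hden.
move=> /(_ (ball v (((e/2)%:C)%C : Cx R))) [].
  by apply: nbhsx_ballx; rewrite ltcR.
move=> w [[p [Pp Hpw]] Hball].
have hvw : vnorm (v - w) < e / 2.
  by move: Hball; rewrite -ball_normE /ball_ /= vnormE ltcR.
have [B HB] := @poly_bound R n z zeta p Hzc Pp.
pose A := (`|B| + 1) / (e / 2).
have A0 : 0 < A by rewrite divr_gt0 // ltr_pwDr // normr_ge0.
have HA : \forall k \near \oo, A < Knorm ev (z k) by move/cvgryPgt: HK; apply.
move: HA; apply: filterS => k HKk.
have K0 : 0 < Knorm ev (z k) by apply: lt_trans HKk.
have [lin _ _] := Hhol.
rewrite rnormE epsR ltcR /kz rnormM rnormV rnormC; last exact: ltW.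
rewrite ltr_pdivrMr //.
have -> : ev v (z k) = ev (v - w) (z k) + ev w (z k).
  by rewrite -[in RHS](mul1r (ev (v - w) (z k))) -lin // scale1r subrK.
rewrite Hpw //.
have [_ Kb] := @Kbound R n Om V ev (z k) Hhol Hbe (Hz k).
set K := Knorm ev (z k) in HKk K0 Kb *.
have h1 := rnormD (ev (v - w) (z k)) (p (z k)).
have h2 := Kb (v - w).
have h3 : K * vnorm (v - w) < K * (e / 2) by rewrite ltr_pM2l.
have h4 : B < K * (e / 2).
  have : A * (e / 2) < K * (e / 2) by rewrite ltr_pM2r.
  have -> : A * (e / 2) = `|B| + 1 by rewrite /A divfK // lt0r_neq0.
  have := ler_norm B; lra.
have h5 := HB k.
have h6 : e * K = K * (e / 2) + K * (e / 2) by rewrite -mulrDr -splitr mulrC.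
rewrite h6; lra.
Qed.
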